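(* Let $\mathcal{X}$ be a finite set, $\underline{Q}$ a lower transition rate operator on $\mathcal{L}(\mathcal{X})$ and $(\underline{Q}_n)_{n\in\mathbb{N}}$ a sequence of lower transition rate operators on $\mathcal{L}(\mathcal{X})$. Then $\|\underline{Q}_n-\underline{Q}\|\to0$ if and only if $\underline{Q}_nf\to\underline{Q}f$ for every $f\in\mathcal{L}(\mathcal{X})$.
   Context: $\mathcal{L}(\mathcal{X})$ is the set of real-valued functions on $\mathcal{X}$ with pointwise operations and order, real constants identified with constant functions, $\mathbb{I}_y$ the indicator of $\{y\}$, and maximum norm $\|f\|=\max_x|f(x)|$; for non-negatively homogeneous operators $A$, $\|A\|\coloneqq\sup\{\|Af\|\colon\|f\|=1\}$. A lower transition rate operator is a map $\underline{Q}\colon\mathcal{L}(\mathcal{X})\to\mathcal{L}(\mathcal{X})$ such that for all $f,g$, $\lambda\ge0$, $\mu\in\mathbb{R}$, $x,y\in\mathcal{X}$: $\underline{Q}(\mu)=0$; $\underline{Q}(f+g)\ge\underline{Q}f+\underline{Q}g$; $\underline{Q}(\lambda f)=\lambda\underline{Q}f$; $x\ne y\Rightarrow\underline{Q}(\mathbb{I}_y)(x)\ge0$. *)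

(* Defs.v *)
From mathcomp Require Import all_boot all_order all_algebra.
From mathcomp Require Import all_classical all_reals all_analysis.
Set Implicit Arguments. Unset Strict Implicit. Unset Printing Implicit Defensive.
Import Order.TTheory GRing.Theory Num.Theory.
Local Open Scope ring_scope.
Local Open Scope classical_set_scope.

Definition gamble (R : realType) (X : finType) := X -> R.

Definition maxnorm (R : realType) (X : finType) (f : X -> R) : R :=
  \big[Num.max/0]_(x : X) `|f x|.

Definition indic (R : realType) (X : finType) (y : X) : X -> R :=
  fun z => if z == y then 1 else 0.

Definition opnorm (R : realType) (X : finType) (A : (X -> R) -> (X -> R)) : R :=
  sup [set r : R | exists f : X -> R, maxnorm f = 1 /\ r = maxnorm (A f)].

Definition opsub (R : realType) (X : finType) (A B : (X -> R) -> (X -> R))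
  : (X -> R) -> (X -> R) := fun f x => A f x - B f x.

Definition lower_rate_op (R : realType) (X : finType)
  (Q : (X -> R) -> (X -> R)) : Prop :=
  [/\ (forall mu : R, Q (fun _ => mu) = (fun _ => 0)),
      (forall f g : X -> R, forall x, Q f x + Q g x <= Q (fun z => f z + g z) x),
      (forall (lam : R) (f : X -> R), 0 <= lam ->
          Q (fun z => lam * f z) = (fun x => lam * Q f x)) &
      (forall x y : X, x != y -> 0 <= Q (indic R y) x)].

(* Main.v *)
Require Import Defs.
From mathcomp Require Import all_boot all_order all_algebra.
From mathcomp Require Import all_classical all_reals all_analysis.
From mathcomp Require Import ring lra.
Import Order.TTheory GRing.Theory Num.Theory.
Local Open Scope ring_scope.
Local Open Scope classical_set_scope.
Set Implicit Arguments. Unset Strict Implicit.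

Lemma maxnorm_ge0 (R : realType) (X : finType) (f : X -> R) : 0 <= maxnorm f.
Proof.
rewrite /maxnorm; elim/big_ind: _ => // a b Ha Hb.
by rewrite le_max Ha.
Qed.

Lemma maxnorm_ub (R : realType) (X : finType) (f : X -> R) x : `|f x| <= maxnorm f.
Proof. exact: (le_bigmax 0 (fun x => `|f x|) x). Qed.

Lemma maxnorm_le (R : realType) (X : finType) (f : X -> R) c :
  0 <= c -> (forall x, `|f x| <= c) -> maxnorm f <= c.
Proof. move=> c0 H; rewrite /maxnorm; apply: bigmax_le => // i _; exact: H. Qed.

Lemma maxnorm_scale (R : realType) (X : finType) (f : X -> R) k :
  0 <= k -> maxnorm (fun x => k * f x) = k * maxnorm f.
Proof.
move=> k0; rewrite /maxnorm.
elim/big_rec2: _ => [|i y1 y2 _ ->]; first by rewrite mulr0.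
by rewrite maxr_pMr // normrM (ger0_norm k0).
Qed.

Definition Bnd (R : realType) (X : finType) (Q : (X -> R) -> (X -> R)) : R :=
  \sum_(x : X) 2 * \sum_(y : X) `|Q (Defs.indic R y) x|.


Lemma Qshift (R : realType) (X : finType) (Q : (X -> R) -> (X -> R)) f c x :
  lower_rate_op Q -> Q (fun z => f z + c) x = Q f x.
Proof.
case=> Hc Hs Hh Hi; apply/eqP; rewrite eq_le; apply/andP; split.
  have := Hs (fun z => f z + c) (fun _ => - c) x.
  rewrite Hc.
  have -> : (fun z => f z + c + - c) = f by apply: funext => z; rewrite addrK.
  by rewrite addr0.
have := Hs f (fun _ => c) x; by rewrite Hc addr0.
Qed.

Lemma Qsum_seq (R : realType) (X : finType) (Q : (X -> R) -> (X -> R)) f x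
  (s : seq X) :
  lower_rate_op Q -> (forall y, 0 <= f y) ->
  \sum_(y <- s) f y * Q (Defs.indic R y) x <=
    Q (fun z => \sum_(y <- s) f y * Defs.indic R y z) x.
Proof.
move=> HQ f0; have [Hc Hs Hh Hi] := HQ.
elim: s => [|a s IH].
  have -> : (fun z => \sum_(y <- [::]) f y * Defs.indic R y z) = (fun _ => 0).
    by apply: funext => z; rewrite big_nil.
  by rewrite Hc big_nil.
have -> : (fun z => \sum_(y <- a :: s) f y * Defs.indic R y z) =
  (fun z => f a * Defs.indic R a z + \sum_(y <- s) f y * Defs.indic R y z).
  by apply: funext => z; rewrite big_cons.
rewrite big_cons; apply: le_trans (Hs _ _ x).
by rewrite Hh // lerD2l.
Qed.

Lemma Qsum (R : realType) (X : finType) (Q : (X -> R) -> (X -> R)) f x :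
  lower_rate_op Q -> (forall y, 0 <= f y) ->
  \sum_(y : X) f y * Q (Defs.indic R y) x <= Q f x.
Proof.
move=> HQ f0.
suff -> : Q f x = Q (fun z => \sum_(y : X) f y * Defs.indic R y z) x.
  exact: Qsum_seq.
congr (Q _ x).
  apply: funext => z; rewrite (bigD1 z) //= big1 ?addr0.
    by rewrite /Defs.indic eqxx mulr1.
  by move=> y yz; rewrite /Defs.indic eq_sym (negbTE yz) mulr0.
Qed.

Lemma Qlow (R : realType) (X : finType) (Q : (X -> R) -> (X -> R)) f x :
  lower_rate_op Q -> (forall y, `|f y| <= 1) ->
  - (2 * \sum_(y : X) `|Q (Defs.indic R y) x|) <= Q f x.
Proof.
move=> HQ f1; rewrite -(Qshift f 1 x HQ).
apply: le_trans (Qsum _ HQ _); last first.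
  by move=> y; have := f1 y; rewrite ler_norml; lra.
rewrite mulr_sumr -sumrN; apply: ler_sum => y _.
set q := Q (Defs.indic R y) x.
have := f1 y; rewrite ler_norml => /andP[a b].
have h1 : - (`|q|) <= q <= `|q| by rewrite -ler_norml.
case/andP: h1 => h1 h2.
nra.
Qed.

Lemma Qup (R : realType) (X : finType) (Q : (X -> R) -> (X -> R)) f x :
  lower_rate_op Q -> Q f x <= - Q (fun z => - f z) x.
Proof.
case=> Hc Hs Hh Hi; have := Hs f (fun z => - f z) x.
have -> : (fun z => f z + - f z) = (fun _ => 0) by apply: funext => z; rewrite subrr.
rewrite Hc; lra.
Qed.

Lemma Qbound (R : realType) (X : finType) (Q : (X -> R) -> (X -> R)) f x :
  lower_rate_op Q -> (forall y, `|f y| <= 1) -> `|Q f x| <= Bnd Q.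
Proof.
move=> HQ f1.
have h1 := Qlow x HQ f1.
have h2 : - (2 * \sum_(y : X) `|Q (Defs.indic R y) x|) <= Q (fun z => - f z) x.
  by apply: Qlow => // y; rewrite normrN.
have h3 := Qup f x HQ.
have h4 : 2 * \sum_(y : X) `|Q (Defs.indic R y) x| <= Bnd Q.
  rewrite /Bnd [X in _ <= X](bigD1 x) //= lerDl; apply: sumr_ge0 => i _.
  by apply: mulr_ge0 => //; apply: sumr_ge0.
rewrite ler_norml; apply/andP; split; lra.
Qed.

Lemma Bnd_ge0 (R : realType) (X : finType) (Q : (X -> R) -> (X -> R)) : 0 <= Bnd Q.
Proof. apply: sumr_ge0 => i _; apply: mulr_ge0 => //; exact: sumr_ge0. Qed.

Lemma Qlip (R : realType) (X : finType) (Q : (X -> R) -> (X -> R)) f g d x :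
  lower_rate_op Q -> 0 < d -> (forall z, `|f z - g z| <= d) ->
  `|Q f x - Q g x| <= d * Bnd Q.
Proof.
move=> HQ d0 H; have [Hc Hs Hh Hi] := HQ.
pose h := fun z => (f z - g z) / d.
have h1 : forall z, `|h z| <= 1.
  by move=> z; rewrite /h normrM normfV (gtr0_norm d0) ler_pdivrMr // mul1r.
have h1' : forall z, `|- h z| <= 1 by move=> z; rewrite normrN.
have ef : f = (fun z => g z + d * h z).
  by apply: funext => z; rewrite /h mulrC divfK ?gt_eqF // addrC subrK.
have eg : g = (fun z => f z + d * (- h z)).
  by apply: funext => z; rewrite /h mulrN mulrC divfK ?gt_eqF // subKr.
have A : Q g x + d * Q h x <= Q f x.
  have := Hs g (fun z => d * h z) x; rewrite -ef (Hh d h (ltW d0)) //.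
have B : Q f x + d * Q (fun z => - h z) x <= Q g x.
  have := Hs f (fun z => d * - h z) x; rewrite -eg (Hh d _ (ltW d0)) //.
have := Qbound x HQ h1; rewrite ler_norml => /andP[b1 b2].
have := Qbound x HQ h1'; rewrite ler_norml => /andP[b3 b4].
rewrite ler_norml; apply/andP; split; nra.
Qed.

Lemma diff_bound (R : realType) (X : finType) (A Q : (X -> R) -> (X -> R)) g :
  lower_rate_op A -> lower_rate_op Q -> maxnorm g = 1 ->
  maxnorm (fun x => A g x - Q g x) <= Bnd A + Bnd Q.
Proof.
move=> HA HQ g1.
have gy : forall y, `|g y| <= 1 by move=> y; rewrite -g1; exact: maxnorm_ub.
apply: maxnorm_le; first by rewrite addr_ge0 // Bnd_ge0.
move=> x; apply: le_trans (ler_normB _ _) _.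
by rewrite lerD // Qbound.
Qed.

Lemma opnorm_has_ub (R : realType) (X : finType) (A Q : (X -> R) -> (X -> R)) :
  lower_rate_op A -> lower_rate_op Q ->
  has_ubound [set r : R | exists f : X -> R,
     maxnorm f = 1 /\ r = maxnorm (opsub A Q f)].
Proof.
move=> HA HQ; exists (Bnd A + Bnd Q) => r [g [g1 ->]].
exact: diff_bound.
Qed.

Lemma forward_key (R : realType) (X : finType) (A Q : (X -> R) -> (X -> R)) f :
  lower_rate_op A -> lower_rate_op Q ->
  maxnorm (fun x => A f x - Q f x) <= maxnorm f * opnorm (opsub A Q).
Proof.
move=> HA HQ; have [Ac As Ah Ai] := HA; have [Qc Qs Qh Qi] := HQ.
have c0 := maxnorm_ge0 f.
set c := maxnorm f in c0 *.
have [c_eq0|c_gt0] := eqVneq c 0.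
  have f0 : f = (fun _ => 0).
    apply: funext => z; apply/eqP; rewrite -normr_eq0 eq_le normr_ge0 andbT.
    by rewrite -c_eq0; exact: maxnorm_ub.
  rewrite c_eq0 mul0r; apply: maxnorm_le => // x.
  by rewrite f0 Ac Qc subrr normr0.
have cp : 0 < c by rewrite lt_neqAle eq_sym c_gt0.
pose h := fun z => c^-1 * f z.
have h1 : maxnorm h = 1.
  by rewrite /h maxnorm_scale ?invr_ge0 // mulVf.
have ef : f = (fun z => c * h z).
  by apply: funext => z; rewrite /h mulrA mulfV ?mul1r.
have -> : (fun x => A f x - Q f x) = (fun x => c * (A h x - Q h x)).
  apply: funext => x; rewrite ef Ah // Qh //; by rewrite mulrBr.
rewrite maxnorm_scale //; apply: ler_wpM2l => //.
apply: ub_le_sup; first exact: opnorm_has_ub.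
by exists h.
Qed.

Definition grid (R : realType) (X : finType) (K : nat)
  (i : {ffun X -> 'I_(2 * K).+1}) : X -> R :=
  fun x => (i x)%:R / K%:R - 1.

Lemma grid_approx (R : realType) (X : finType) (K : nat) (g : X -> R) :
  (0 < K)%N -> (forall y, `|g y| <= 1) ->
  exists i : {ffun X -> 'I_(2 * K).+1},
    forall x, `|g x - grid R i x| <= K%:R^-1.
Proof.
move=> K0 g1.
have Kp : 0 < K%:R :> R by rewrite ltr0n.
pose t x := (g x + 1) * K%:R.
have t0 : forall x, 0 <= t x.
  by move=> x; have := g1 x; rewrite ler_norml => /andP[a b]; apply: mulr_ge0; lra.
have t2 : forall x, t x <= (2 * K)%:R.
  move=> x; have := g1 x; rewrite ler_norml => /andP[a b].
  rewrite natrM /t; nra.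
exists [ffun x => inord (Num.truncn (t x))] => x.
have [lo hi] : ((Num.truncn (t x))%:R <= t x) /\ (t x < (Num.truncn (t x)).+1%:R :> R).
  by have /andP[] := truncn_itv (t0 x).
have le2K : (Num.truncn (t x) <= 2 * K)%N.
  by rewrite -(ler_nat R); apply: le_trans lo (t2 x).
rewrite /grid ffunE inordK ?ltnS //.
set m := (Num.truncn (t x))%:R : R.
rewrite -natr1 in hi. fold m in hi.
have e : g x - (m / K%:R - 1) = (t x - m) / K%:R.
  by rewrite /t; field; rewrite gt_eqF.
rewrite e normrM normfV (gtr0_norm Kp) ler_pdivrMr // mulVf ?gt_eqF //.
rewrite ler_norml; apply/andP; split; lra.
Qed.

Lemma backward_key (R : realType) (X : finType) (A Q : (X -> R) -> (X -> R))
  (K : nat) (eps : R) :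
  lower_rate_op A -> lower_rate_op Q -> (0 < K)%N ->
  (Bnd A + Bnd Q) / K%:R <= eps / 2 ->
  (forall i : {ffun X -> 'I_(2 * K).+1},
     maxnorm (fun x => A (grid R i) x - Q (grid R i) x) <= eps / 2) ->
  forall g, maxnorm g = 1 -> maxnorm (opsub A Q g) <= eps.
Proof.
move=> HA HQ K0 hK hi g g1.
have gy : forall y, `|g y| <= 1 by move=> y; rewrite -g1; exact: maxnorm_ub.
have [i Hi] := grid_approx K0 gy.
have Kp : 0 < K%:R :> R by rewrite ltr0n.
have d0 : 0 < K%:R^-1 :> R by rewrite invr_gt0.
have e0 : 0 <= eps.
  have := le_trans (maxnorm_ge0 _) (hi i); lra.
have e0' : 0 <= eps / 2 by rewrite divr_ge0.
apply: maxnorm_le => // x.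
have l1 := Qlip x HA d0 Hi.
have l2 := Qlip x HQ d0 Hi.
have l3 : `|A (grid R i) x - Q (grid R i) x| <= eps / 2.
  apply: le_trans (hi i); exact: (maxnorm_ub (fun x => A (grid R i) x - Q (grid R i) x)).
rewrite /opsub.
have t : `|A g x - Q g x| <= `|A g x - A (grid R i) x| +
   `|A (grid R i) x - Q (grid R i) x| + `|Q g x - Q (grid R i) x|.
  rewrite (distrC (Q g x)).
  apply: le_trans (ler_distD (Q (grid R i) x) _ _) _.
  rewrite lerD2r; exact: ler_distD.
have : K%:R^-1 * Bnd A + K%:R^-1 * Bnd Q <= eps / 2 by rewrite -mulrDr mulrC.
lra.
Qed.

Lemma opnorm_le (R : realType) (X : finType) (A Q : (X -> R) -> (X -> R)) eps :
  0 <= eps -> (forall g, maxnorm g = 1 -> maxnorm (opsub A Q g) <= eps) ->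
  0 <= opnorm (opsub A Q) <= eps.
Proof.
move=> e0 H; rewrite /opnorm.
set S := [set r : R | _].
have ubS : ubound S eps by move=> r [g [g1 ->]]; exact: H.
have [[r Sr]|S0] := pselect (S !=set0); last first.
  have -> : S = set0 by apply/seteqP; split => // r Sr; apply: S0; exists r.
  by rewrite sup0 lexx.
apply/andP; split; last by apply: ge_sup => //; exists r.
have [g [g1 er]] := Sr.
apply: le_trans (maxnorm_ge0 (opsub A Q g)) _.
rewrite -er; apply: ub_le_sup => //; by exists eps.
Qed.

Lemma exK (R : realType) (a e : R) : 0 <= a -> 0 < e ->
  exists K : nat, (0 < K)%N /\ a / K%:R <= e.
Proof.
move=> a0 e0; have q0 : 0 <= a / e by rewrite divr_ge0 // ltW.
have /andP[_ hi] := truncn_itv q0.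
exists (Num.truncn (a / e)).+1; split => //.
rewrite ler_pdivrMr ?ltr0n //.
move: hi; rewrite ltr_pdivrMr // => hi.
rewrite mulrC; exact: ltW.
Qed.

Definition Cst (R : realType) (X : finType) : R := \sum_(x : X) 2 * \sum_(y : X) 1.

Lemma Cst_ge0 (R : realType) (X : finType) : 0 <= Cst R X.
Proof. apply: sumr_ge0 => i _; apply: mulr_ge0 => //; apply: sumr_ge0 => j _; exact: ler01. Qed.

Lemma Bn_bound (R : realType) (X : finType) (A Q : (X -> R) -> (X -> R)) :
  (forall y, maxnorm (fun x => A (Defs.indic R y) x - Q (Defs.indic R y) x) <= 1) ->
  Bnd A <= Bnd Q + Cst R X.
Proof.
move=> H; rewrite /Bnd /Cst -big_split /=; apply: ler_sum => x _.
rewrite -mulrDr ler_wpM2l // -big_split /=; apply: ler_sum => y _.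
have := le_trans (maxnorm_ub (fun x => A (Defs.indic R y) x - Q (Defs.indic R y) x) x) (H y).
move=> h; have := ler_distD (Q (Defs.indic R y) x) (A (Defs.indic R y) x) 0.
rewrite !subr0 => h2; apply: le_trans h2 _.
by rewrite addrC lerD // -normrN opprB.
Qed.

Theorem proposition5 (R : realType) (X : finType)
  (Q : (X -> R) -> (X -> R)) (Qn : nat -> (X -> R) -> (X -> R)) :
  lower_rate_op Q -> (forall n, lower_rate_op (Qn n)) ->
  ((fun n => opnorm (opsub (Qn n) Q)) @ \oo --> 0) <->
  (forall f : X -> R, (fun n => maxnorm (fun x => Qn n f x - Q f x)) @ \oo --> 0).
Proof.
move=> HQ HQn; split.
  move=> /cvgrPdist_le Hn f; apply/cvgrPdist_le => eps e0.
  have c0 := maxnorm_ge0 f; set c := maxnorm f in c0 *.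
  have c1 : 0 < c + 1 by lra.
  have e'0 : 0 < eps / (c + 1) by rewrite divr_gt0.
  have ee : eps / (c + 1) * (c + 1) = eps by rewrite divfK ?gt_eqF.
  apply: filterS (Hn _ e'0) => n hn.
  have := forward_key f (HQn n) HQ; rewrite -/c => fk.
  rewrite sub0r normrN ger0_norm ?maxnorm_ge0 //.
  move: hn; rewrite sub0r normrN => hn.
  have hn' := le_trans (ler_norm _) hn.
  set e' := eps / (c + 1) in e'0 ee hn hn'.
  set o := opnorm _ in fk hn hn'.
  nra.
move=> Hp; apply/cvgrPdist_le => eps e0.
have E1 : \forall n \near \oo, forall y : X,
    maxnorm (fun x => Qn n (Defs.indic R y) x - Q (Defs.indic R y) x) <= 1.
  apply: filter_forall => y.
  have /cvgrPdist_le /(_ 1 ltr01) := Hp (Defs.indic R y).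
  apply: filterS => n; rewrite sub0r normrN ger0_norm //; exact: maxnorm_ge0.
have e2 : 0 < eps / 2 by rewrite divr_gt0.
have a0 : 0 <= 2 * Bnd Q + Cst R X.
  by rewrite addr_ge0 ?Cst_ge0 // mulr_ge0 // Bnd_ge0.
have [K [K0 hK]] := exK a0 e2.
have E2 : \forall n \near \oo, forall i : {ffun X -> 'I_(2 * K).+1},
    maxnorm (fun x => Qn n (grid R i) x - Q (grid R i) x) <= eps / 2.
  apply: filter_forall => i.
  have /cvgrPdist_le /(_ _ e2) := Hp (grid R i).
  apply: filterS => n; rewrite sub0r normrN ger0_norm //; exact: maxnorm_ge0.
apply: filterS2 E1 E2 => n h1 h2.
have hB := Bn_bound h1.
have hK' : (Bnd (Qn n) + Bnd Q) / K%:R <= eps / 2.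
  apply: le_trans hK; apply: ler_wpM2r; first by rewrite invr_ge0.
  lra.
have := opnorm_le (ltW e0) (backward_key (HQn n) HQ K0 hK' h2); case/andP => o0 o1.
by rewrite sub0r normrN ger0_norm.
Qed.
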